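(* Let $\mathbf{D}$ be a structure whose universe is $\{0,1\}$ and let $\mathbf{X}$ be a $\mathbf{D}$-separated structure with universe $X$. For finite $s,t\subseteq X$ define $s\sqsubseteq t$ iff for every homomorphism $h:\mathbf{X}\to\mathbf{D}$ we have $\min h[s]\le\max h[t]$ (with $\min\emptyset=1$, $\max\emptyset=0$). Then the set of homomorphisms from $\mathbf{X}$ to $\mathbf{D}$ equals the set of maps $f:X\to\{0,1\}$ that preserve $\sqsubseteq$, i.e. such that $s\sqsubseteq t$ implies $\min f[s]\le\max f[t]$ for all finite $s,t\subseteq X$.
   Context: A structure is a set with constants, relations and (possibly partial) operations of a first-order language; homomorphisms preserve them. A structure is $\mathbf{D}$-separated if it embeds (injective homomorphism preserving and reflecting all relations) into some power of $\mathbf{D}$. The maps preserving $\sqsubseteq$ are exactly the homomorphisms from $(X,\sqsubseteq)$ into the structure $\mathbf{I}$ on $\{0,1\}$ whose relations $I_{n,m}(a_0,\dots,a_{n-1},b_0,\dots,b_{m-1})$ mean $\min_i a_i\le\max_j b_j$. *)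

(* Defs.v *)
From mathcomp Require Import all_boot.
From Stdlib Require Import ClassicalEpsilon.
Set Implicit Arguments. Unset Strict Implicit. Unset Printing Implicit Defensive.

Record signature := Signature {
  csym : Type;
  fsym : Type;
  farity : fsym -> nat;
  rsym : Type;
  rarity : rsym -> nat }.

(* A structure over L with universe A; operations may be partial (None = undefined). *)
Record structure (L : signature) (A : Type) := Structure {
  cst : csym L -> A;
  op  : forall f : fsym L, ('I_(@farity L f) -> A) -> option A;
  rel : forall r : rsym L, ('I_(@rarity L r) -> A) -> Prop }.
Arguments cst {L A} s c.
Arguments op {L A} s f x.
Arguments rel {L A} s r x.

Definition hom (L : signature) (A B : Type) (SA : structure L A) (SB : structure L B)
  (h : A -> B) : Prop :=
  (forall c, h (cst SA c) = cst SB c) /\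
  (forall f (x : 'I_(@farity L f) -> A) y,
      op SA f x = Some y -> op SB f (fun k => h (x k)) = Some (h y)) /\
  (forall r (x : 'I_(@rarity L r) -> A), rel SA r x -> rel SB r (fun k => h (x k))).

Definition embedding (L : signature) (A B : Type) (SA : structure L A) (SB : structure L B)
  (h : A -> B) : Prop :=
  hom SA SB h /\ injective h /\
  (forall r (x : 'I_(@rarity L r) -> A), rel SB r (fun k => h (x k)) -> rel SA r x).

(* The power D^I: constants and relations pointwise; an operation is defined
   at a tuple iff it is defined in every coordinate, with the coordinatewise value. *)
Definition pow_op (L : signature) (D : Type) (SD : structure L D) (I : Type)
  (f : fsym L) (x : 'I_(@farity L f) -> (I -> D)) : option (I -> D) :=
  match excluded_middle_informative
          (forall i, exists y, op SD f (fun k => x k i) = Some y) with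
  | left H => Some (fun i => proj1_sig (constructive_indefinite_description _ (H i)))
  | right _ => None
  end.

Definition power (L : signature) (D : Type) (SD : structure L D) (I : Type)
  : structure L (I -> D) :=
  {| cst := fun c _ => cst SD c;
     op := @pow_op L D SD I;
     rel := fun r x => forall i, rel SD r (fun k => x k i) |}.

Definition separated (L : signature) (D X : Type) (SD : structure L D) (SX : structure L X)
  : Prop :=
  exists (I : Type) (e : X -> (I -> D)), embedding SX (power SD I) e.

(* For f : X -> {0,1} (0 = false, 1 = true) and finite s, t ⊆ X (given as
   lists), min f[s] <= max f[t], with min ∅ = 1 and max ∅ = 0. *)
Definition min_img (X : Type) (f : X -> bool) (s : seq X) : bool := all f s.
Definition max_img (X : Type) (f : X -> bool) (t : seq X) : bool := has f t.
Definition minmax_le (X : Type) (f : X -> bool) (s t : seq X) : Prop :=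
  (nat_of_bool (min_img f s) <= nat_of_bool (max_img f t))%N.

Definition sqle (L : signature) (X : Type) (SD : structure L bool) (SX : structure L X)
  (s t : seq X) : Prop :=
  forall h : X -> bool, hom SX SD h -> minmax_le h s t.

Definition preserves_sqle (L : signature) (X : Type) (SD : structure L bool)
  (SX : structure L X) (f : X -> bool) : Prop :=
  forall s t : seq X, sqle SD SX s t -> minmax_le f s t.

(* Main.v *)
From Stdlib Require Import Classical FunctionalExtensionality.
Require Import Defs.
From mathcomp Require Import all_boot.

Lemma has_filterC (X : Type) (f : X -> bool) zs : has f (filter (predC f) zs) = false.
Proof. by elim: zs => //= z zs IH; case Hf: (f z) => //=; rewrite Hf IH. Qed.

Lemma agree_aux (X : Type) (h f : X -> bool) (zs : seq X) :
  all h (filter f zs) -> ~~ has h (filter (predC f) zs) ->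
  all (fun z => h z == f z) zs.
Proof.
elim: zs => [|z zs IH] //=.
case Hf: (f z) => /=.
- by move=> /andP[-> A] B; rewrite IH.
- by rewrite negb_or => A /andP[B C]; rewrite IH // andbT; case: (h z) B.
Qed.

Lemma agree (L : signature) (SD : structure L bool) (X : Type)
  (SX : structure L X) (f : X -> bool) :
  preserves_sqle SD SX f -> forall zs : seq X,
  exists h, hom SX SD h /\ all (fun z => h z == f z) zs.
Proof.
move=> Hp zs.
set s := filter f zs; set t := filter (predC f) zs.
have Hviol : ~ minmax_le f s t.
  rewrite /minmax_le /min_img /max_img.
  have -> : all f s by apply: filter_all.
  have -> : has f t = false by apply: has_filterC.
  by [].
have : ~ sqle SD SX s t by move=> H; apply: Hviol; apply: Hp.
rewrite /sqle => /not_all_ex_not [h Hh].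
apply imply_to_and in Hh; case: Hh => Hh Hn.
exists h; split => //; apply: agree_aux.
- move: Hn; rewrite /minmax_le /min_img /max_img.
  by case: (all h s); case: (has h t).
- move: Hn; rewrite /minmax_le /min_img /max_img.
  by case: (all h s); case: (has h t).
Qed.

Lemma fun_agree (X : Type) (n : nat) (h f : X -> bool) (x : 'I_n -> X) (zs : seq X) :
  all (fun z => h z == f z) (zs ++ map x (enum 'I_n)) ->
  (fun k => h (x k)) = (fun k => f (x k)).
Proof.
rewrite all_cat all_map => /andP[_ /allP H].
apply: functional_extensionality => k; apply/eqP; apply: H; by rewrite mem_enum.
Qed.

Theorem mainTheorem9 (L : signature) (SD : structure L bool) (X : Type)
  (SX : structure L X) :
  separated SD SX ->
  forall f : X -> bool, hom SX SD f <-> preserves_sqle SD SX f.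
Proof.
move=> _ f; split.
  by move=> Hf s t Hst; apply: Hst.
move=> Hp; split; [|split].
- move=> c; have [h [Hh Ha]] := @agree _ _ _ _ _ Hp [:: cst SX c].
  move: Ha => /= /andP[/eqP <- _]; by case: Hh.
- move=> g x y Hy; have [h [Hh Ha]] := @agree _ _ _ _ _ Hp (y :: map x (enum 'I_(farity g))).
  have E := @fun_agree _ _ _ _ _ [:: y] Ha.
  move: Ha => /= /andP[/eqP <- _]; rewrite -E.
  by case: Hh => _ [Ho _]; apply: Ho.
- move=> r x Hr; have [h [Hh Ha]] := @agree _ _ _ _ _ Hp ([::] ++ map x (enum 'I_(rarity r))).
  rewrite -(@fun_agree _ _ _ _ _ [::] Ha).
  by case: Hh => _ [_ Hrel]; apply: Hrel.
Qed.
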